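(* Let $G$ be a random graph on the node set $\mathbb{N}$ whose distribution $P$ is exchangeable, and let $\phi:\mathcal{U}\to\mathbb{R}$ be the function determined by its Möbius parameter via $\phi([F]) = Z(F) = P(F\subseteq G)$ for every finite labeled graph $F$ with node set contained in $\mathbb{N}$. Then $\phi$ is bounded and positive definite on the semigroup $(\mathcal{U},+)$ and $\phi(\emptyset)=1$; that is, $\phi\in\mathcal{P}^b_1(\mathcal{U})$.
   Context: All graphs are simple. For $n\in\mathbb{N}$, $\mathcal{L}_n$ is the set of labeled simple graphs with node set $[n]=\{1,\dots,n\}$, and $\mathcal{L}_\infty$ is the set of simple graphs with node set $\mathbb{N}$; a random graph is a random element of $\mathcal{L}_\infty$ (with the $\sigma$-algebra generated by the edge indicators). For $G\in\mathcal{L}_\infty$ and $n\in\mathbb{N}$, $G[n]\in\mathcal{L}_n$ is the subgraph induced by $[n]$. For $H\in\mathcal{L}_n$ and a permutation $\sigma$ of $[n]$, $H_\sigma$ is the relabeled graph with $i\sim j$ in $H$ iff $\sigma(i)\sim\sigma(j)$ in $H_\sigma$. The distribution $P$ is exchangeable if $P(G[n]=H)=P(G[n]=H_\sigma)$ for all $n$, all $H\in\mathcal{L}_n$ and all permutations $\sigma$ of $[n]$. For a finite labeled graph $F$ with node set in $\mathbb{N}$, $F\subseteq G$ means every edge of $F$ is an edge of $G$; the function $Z(F)=P(F\subseteq G)$ is the Möbius parameter of $P$. $\mathcal{U}$ denotes the set of unlabeled finite simple graphs (isomorphism classes $[F]$ of finite labeled graphs $F$), including the empty graph $\emptyset$;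 under exchangeability $Z(F)$ depends only on $[F]$, which defines $\phi$. $(\mathcal{U},+)$ is the Abelian semigroup where $U+V$ is the node-disjoint union, with neutral element $\emptyset$. A function $\phi:\mathcal{U}\to\mathbb{R}$ is positive definite if $\sum_{j,k=1}^n c_jc_k\phi(s_j+s_k)\ge 0$ for all $n\in\mathbb{N}$, $c_j\in\mathbb{R}$, $s_j\in\mathcal{U}$. $\mathcal{P}^b_1(\mathcal{U})$ is the set of bounded positive definite functions $\phi$ on $\mathcal{U}$ with $\phi(\emptyset)=1$. *)

(* Defs.v *)
From HB Require Import structures.
From mathcomp Require Import all_boot all_order all_algebra all_fingroup.
From mathcomp Require Import all_classical all_reals all_analysis.
Set Implicit Arguments. Unset Strict Implicit. Unset Printing Implicit Defensive.
Import Order.TTheory GRing.Theory Num.Theory.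

(* Node i of the paper ({1,2,...}) is node (i-1) : nat here; [n] = 'I_n. *)

Definition simple_rel (V : finType) (e : rel V) : Prop :=
  symmetric e /\ irreflexive e.

(* Relabeling H_sigma: i ~ j in H iff sigma i ~ sigma j in H_sigma. *)
Definition relabel (n : nat) (H : rel 'I_n) (s : {perm 'I_n}) : rel 'I_n :=
  fun x y => H ((s^-1)%g x) ((s^-1)%g y).

(* Finite graphs, representatives of elements of U: a node count n and
   an adjacency relation on 'I_n (simplicity imposed separately). *)
Definition fingraph_t := {n : nat & rel 'I_n}.

Definition fg_simple (F : fingraph_t) : Prop := simple_rel (projT2 F).

Definition fg_empty : fingraph_t := existT (fun n => rel 'I_n) 0%N (fun _ _ => false).

Definition dunion (F1 F2 : fingraph_t) : fingraph_t :=
  existT (fun n => rel 'I_n) (projT1 F1 + projT1 F2)%N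
    (fun x y => match fintype.split x, fintype.split y with
                | inl i, inl j => projT2 F1 i j
                | inr i, inr j => projT2 F2 i j
                | _, _ => false
                end).

Section RandomGraph.
Context (d : measure_display) (T : measurableType d) (R : realType).
Local Open Scope classical_set_scope.

Definition random_graph (G : T -> nat -> nat -> bool) : Prop :=
  (forall i j : nat, measurable [set w | G w i j]) /\
  (forall w, symmetric (G w) /\ irreflexive (G w)).

Definition induced_eq (G : T -> nat -> nat -> bool) (n : nat) (H : rel 'I_n)
  : set T := [set w | forall i j : 'I_n, G w i j = H i j].

Definition exchangeable (P : probability T R) (G : T -> nat -> nat -> bool)
  : Prop :=
  forall (n : nat) (H : rel 'I_n) (s : {perm 'I_n}), simple_rel H ->
    P (induced_eq G H) = P (induced_eq G (relabel H s)).

Definition sub_event (G : T -> nat -> nat -> bool) (n : nat) (F : rel 'I_n)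
  (f : 'I_n -> nat) : set T :=
  [set w | forall i j : 'I_n, F i j -> G w (f i) (f j)].

End RandomGraph.

Definition positive_definite (R : realType) (phi : fingraph_t -> R) : Prop :=
  forall (m : nat) (c : 'I_m -> R) (s : 'I_m -> fingraph_t),
    (forall j, fg_simple (s j)) ->
    (0 <= \sum_(j < m) \sum_(k < m) c j * c k * phi (dunion (s j) (s k)))%R.

Definition bounded_fg (R : realType) (phi : fingraph_t -> R) : Prop :=
  exists M : R, forall F, fg_simple F -> (`|phi F| <= M)%R.

(* Main.v *)
Require Import Defs.
From HB Require Import structures.
From mathcomp Require Import all_boot all_order all_algebra all_fingroup.
From mathcomp Require Import all_classical all_reals all_analysis.
Import Order.TTheory GRing.Theory Num.Theory.
Local Open Scope classical_set_scope.
Local Open Scope ring_scope.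
Set Implicit Arguments. Unset Strict Implicit.

Lemma dunion_simple (F1 F2 : fingraph_t) :
  fg_simple F1 -> fg_simple F2 -> fg_simple (dunion F1 F2).
Proof.
case: F1 => n1 r1; case: F2 => n2 r2 [s1 i1] [s2 i2]; split => /=.
  by move=> x y; case: (fintype.split x) => a; case: (fintype.split y) => b.
by move=> x; case: (fintype.split x) => a.
Qed.

Definition gjoin (n1 n2 : nat) (f1 : 'I_n1 -> nat) (f2 : 'I_n2 -> nat)
  (x : 'I_(n1 + n2)) : nat :=
  match fintype.split x with inl a => f1 a | inr b => f2 b end.

Lemma gjoin_inj n1 n2 (f1 : 'I_n1 -> nat) (f2 : 'I_n2 -> nat) :
  injective f1 -> injective f2 -> (forall a b, f1 a <> f2 b) ->
  injective (gjoin f1 f2).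
Proof.
move=> h1 h2 h12 x y; rewrite /gjoin -[x]splitK -[y]splitK.
case: (fintype.split x) => a; case: (fintype.split y) => b; rewrite !unsplitK.
- by move/h1 ->.
- by move/h12.
- by move/esym/h12.
- by move/h2 ->.
Qed.

Lemma sub_event_dunion (d : measure_display) (T : measurableType d)
  (G : T -> nat -> nat -> bool) (F1 F2 : fingraph_t)
  (f1 : 'I_(projT1 F1) -> nat) (f2 : 'I_(projT1 F2) -> nat) :
  sub_event G (projT2 (dunion F1 F2)) (gjoin f1 f2) =
  sub_event G (projT2 F1) f1 `&` sub_event G (projT2 F2) f2.
Proof.
case: F1 f1 => n1 r1 f1; case: F2 f2 => n2 r2 f2.
apply/seteqP; split => w /=.
  move=> h; split => i j e.
    by have := h (lshift n2 i) (lshift n2 j); rewrite /gjoin !(unsplitK (inl _)); apply.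
  by have := h (rshift n1 i) (rshift n1 j); rewrite /gjoin !(unsplitK (inr _)); apply.
move=> [h1 h2] x y; rewrite /gjoin.
case: (fintype.split x) => a; case: (fintype.split y) => b //.
- exact: h1.
- exact: h2.
Qed.

Lemma sub_event_meas (d : measure_display) (T : measurableType d)
  (G : T -> nat -> nat -> bool) :
  (forall i j, measurable [set w | G w i j]) ->
  forall n (F : rel 'I_n) f, measurable (sub_event G F f).
Proof.
move=> hG n F f.
have -> : sub_event G F f = \bigcap_(q in [set: 'I_n * 'I_n])
   [set w | F q.1 q.2 -> G w (f q.1) (f q.2)].
  apply/seteqP; split => w /=.
    by move=> h [i j] _; exact: h.
  by move=> h i j; exact: (h (i, j)).
apply: fin_bigcap_measurable; first exact: finite_finset.
move=> [i j] _ /=; case: (F i j).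
  by rewrite (_ : [set w | true -> _] = [set w | G w (f i) (f j)]) //; apply/seteqP; split => w /=; auto.
by rewrite (_ : [set w | false -> _] = setT) //; apply/seteqP; split => w //=.
Qed.

Lemma emb_inj (N i n : nat) : (0 < N)%N -> injective (fun x : 'I_n => (x * N + i)%N).
Proof.
move=> N0 x y /eqP; rewrite eqn_add2r eqn_pmul2r // => /eqP; exact: val_inj.
Qed.

Lemma emb_disj (N i i' n n' : nat) : (i < N)%N -> (i' < N)%N -> i != i' ->
  forall (a : 'I_n) (b : 'I_n'), (a * N + i)%N <> (b * N + i')%N.
Proof.
move=> hi hi' ne a b /(congr1 (modn^~ N)); rewrite !modnMDl !modn_small //.
by move=> e; rewrite e eqxx in ne.
Qed.

Lemma arch_lemma (R : realType) (C Q : R) :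
  (forall k : nat, 0 <= C + k%:R * Q) -> 0 <= Q.
Proof.
move=> h; rewrite leNgt; apply/negP => Q0.
have nQ : 0 < - Q by rewrite oppr_gt0.
have := h (Num.Def.trunc (C / - Q)).+1.
have := truncnS_gt (C / - Q).
set k := (Num.Def.trunc (C / - Q)).+1%:R.
rewrite ltr_pdivrMr // => hk.
have : C + k * Q < 0 by rewrite -[k * Q]opprK -mulrN subr_lt0.
by rewrite ltNge => /negP.
Qed.
Lemma gram (d : measure_display) (T : measurableType d) (R : realType)
  (P : probability T R) (I : finType) (E : I -> set T) (c : I -> R)
  (p : I -> I -> R) :
  (forall a, measurable (E a)) ->
  (forall a b, ((p a b)%:E = P (E a `&` E b))%E) ->
  0 <= \sum_a \sum_b c a * c b * p a b.
Proof.
move=> mE hp; have mT := @measurableT _ T.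
have mEI : forall a b, measurable (E a `&` E b) by move=> a b; exact: measurableI.
have intab : forall a b, P.-integrable [set: T]
   (fun w => ((c a * c b)%:E * (\1_(E a `&` E b) w)%:E)%E).
  by move=> a b; apply: (integrableZl mT); exact: integrable_indic.
have inta : forall a, P.-integrable [set: T]
   (fun w => (\sum_b (c a * c b)%:E * (\1_(E a `&` E b) w)%:E)%E).
  by move=> a; apply: (integrable_sum mT) => b _; exact: intab.
have h : (\int[P]_(w in [set: T]) ((\sum_a c a * \1_(E a) w) ^+ 2)%:E
   = (\sum_a \sum_b c a * c b * p a b)%:E)%E.
  transitivity (\int[P]_(w in [set: T]) (\sum_a \sum_b
      (c a * c b)%:E * (\1_(E a `&` E b) w)%:E))%E.
    apply: eq_integral => w _.
    rewrite expr2 mulr_suml -sumEFin; apply: eq_bigr => a _.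
    rewrite mulr_sumr -sumEFin; apply: eq_bigr => b _.
    by rewrite indicI -EFinM /= mulrACA.
  rewrite (integral_sum mT inta); rewrite -sumEFin; apply: eq_bigr => a _.
  rewrite (integral_sum mT (intab a)); rewrite -sumEFin; apply: eq_bigr => b _.
  rewrite (integralZl mT (integrable_indic _ (mEI a b))) integral_indic // setIT.
  rewrite [RHS]EFinM; congr (_ * _)%E; exact/esym/hp.
suff: (0%:E <= (\sum_a \sum_b c a * c b * p a b)%:E)%E by rewrite lee_fin.
rewrite -h; apply: integral_ge0 => w _.
by rewrite lee_fin sqr_ge0.
Qed.

Lemma sum_pair (R : realType) (I J : finType) (F : I * J -> R) :
  \sum_(a : I * J) F a = \sum_i \sum_j F (i, j).
Proof. by rewrite pair_bigA; apply: eq_bigr => -[i j]. Qed.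

Theorem lemma1 (d : measure_display) (T : measurableType d) (R : realType)
  (P : probability T R) (G : T -> nat -> nat -> bool)
  (phi : fingraph_t -> R) :
  random_graph G ->
  exchangeable P G ->
  (forall (F : fingraph_t) (f : 'I_(projT1 F) -> nat), fg_simple F -> injective f ->
     ((phi F)%:E = P (sub_event G (projT2 F) f))%E) ->
  bounded_fg phi /\ positive_definite phi /\ phi fg_empty = 1%R.
Proof.
move=> [hGm hGs] hexch hphi.
have fP : forall A, measurable A -> ((fine (P A))%:E = P A)%E /\ 0 <= fine (P A) <= 1.
  move=> A mA; have fA : P A \is a fin_num by apply: fin_num_measure.
  split; first exact: fineK.
  by rewrite -!lee_fin fineK // measure_ge0 probability_le1.
have phiP : forall (F : fingraph_t) (f : 'I_(projT1 F) -> nat), fg_simple F -> injective f -> 0 <= phi F <= 1.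
  move=> F f sF inj; have := hphi F f sF inj.
  have [e b] := fP _ (sub_event_meas hGm (projT2 F) f).
  by rewrite -e => -[->].
split.
  exists 1 => F sF; have /andP[a b] := phiP F (fun x => val x) sF val_inj.
  by rewrite ger0_norm.
split; last first.
  have sE : fg_simple fg_empty by split.
  have := hphi fg_empty (fun x => val x) sE val_inj.
  rewrite (_ : sub_event _ _ _ = setT); first by rewrite probability_setT => -[].
  by apply/seteqP; split => w //= _ [].
move=> m c s ss.
pose Q := \sum_(j < m) \sum_(l < m) c j * c l * phi (dunion (s j) (s l)).
pose C := \sum_(j < m) \sum_(l < m) `|c j| * `|c l|.
apply: (@arch_lemma R C) => k.
suff : 0 <= k.+1%:R * (C + k%:R * Q) by rewrite pmulr_rge0 // ltr0Sn.
pose N := k.+1.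
pose emb (i : 'I_N) (n : nat) := fun x : 'I_n => (x * N + i)%N.
pose E (a : 'I_N * 'I_m) := sub_event G (projT2 (s a.2)) (emb a.1 (projT1 (s a.2))).
have mE : forall a, measurable (E a) by move=> a; exact: sub_event_meas.
pose p (a b : 'I_N * 'I_m) := if a.1 == b.1 then fine (P (E a `&` E b))
   else phi (dunion (s a.2) (s b.2)).
have hp : forall a b, ((p a b)%:E = P (E a `&` E b))%E.
  move=> [i j] [i' l]; rewrite /p /=; case: eqP => [_|ne].
    by have [] := fP _ (measurableI _ _ (mE (i, j)) (mE (i', l))).
  rewrite (hphi (dunion (s j) (s l)) (gjoin (emb i _) (emb i' _))).
  - by rewrite sub_event_dunion.
  - exact: dunion_simple.
  - apply: gjoin_inj; [exact: emb_inj | exact: emb_inj | ].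
    apply: emb_disj; [exact: ltn_ord | exact: ltn_ord | ].
    by apply/eqP => e; apply: ne; exact: val_inj.
have := @gram _ _ _ P _ E (fun a => c a.2) p mE hp.
move/le_trans; apply.
rewrite sum_pair.
have eS : forall i : 'I_N, \sum_(j < m) \sum_(b : 'I_N * 'I_m) c j * c b.2 * p (i, j) b
   <= C + Q *+ k.
  move=> i.
  have -> : \sum_(j < m) \sum_(b : 'I_N * 'I_m) c j * c b.2 * p (i, j) b =
    \sum_(j < m) \sum_(i' < N) \sum_(l < m) c j * c l * p (i, j) (i', l).
    by apply: eq_bigr => j _; rewrite sum_pair.
  rewrite exchange_big (bigD1 i) //=; apply: lerD.
    apply: ler_sum => j _; apply: ler_sum => l _.
    rewrite /p /= eqxx.
    have [_ /andP[x0 x1]] := fP _ (measurableI _ _ (mE (i, j)) (mE (i, l))).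
    apply: le_trans (ler_norm _) _; rewrite !normrM (ger0_norm x0).
    by apply: ler_piMr.
  rewrite (eq_bigr (fun _ => Q)); last first.
    move=> i' ne; apply: eq_bigr => j _; apply: eq_bigr => l _.
    by rewrite /p /= eq_sym (negbTE ne).
  by rewrite sumr_const cardC1 card_ord.
apply: le_trans (ler_sum _ (fun i _ => eS i)) _.
by rewrite sumr_const card_ord -(mulr_natl (C + Q *+ k)) -(mulr_natl Q k).
Qed.
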